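(* Let $\varphi:[0,1]\to[0,\infty)$ be a decreasing function with $\varphi(t)>0$ for $0\le t<1$ and $\lim_{r\to1^-}\varphi(r)=0$. Then there exists a radial weight $\omega=\omega_\varphi$ such that $\widetilde{\omega}\notin\widehat{\mathcal{D}}$ but $A^p\subset A^p_\omega\subset A^p_\varphi$ for all $0<p<\infty$. Moreover, if $\varphi$ is differentiable and satisfies $-\varphi'(t)/\varphi(t)\le C/(1-t)$ for some constant $C>0$ and all $0\le t<1$, then $\varphi$ is a regular weight.
   Context: $\mathbb{D}$ is the unit disc, $\mathcal{H}(\mathbb{D})$ the analytic functions on $\mathbb{D}$, $dA=\frac{dx\,dy}{\pi}$. A radial weight is a non-negative $\omega\in L^1([0,1))$, extended by $\omega(z)=\omega(|z|)$, with $\widehat{\omega}(r)=\int_r^1\omega(s)\,ds>0$ for all $0\le r<1$. For $0<p<\infty$, $A^p_\omega$ is the space of $f\in\mathcal{H}(\mathbb{D})$ with $\int_{\mathbb{D}}|f|^p\omega\,dA<\infty$; $A^p$ denotes $A^p_\omega$ with $\omega\equiv1$. $\widetilde{\omega}(r)=\frac{\widehat{\omega}(r)}{1-r}$. A radial weight $\nu$ belongs to $\widehat{\mathcal{D}}$ if $\nu$ is integrable on $[0,1)$ and there is $C\ge1$ with $\widehat{\nu}(r)\le C\,\widehat{\nu}\big(\frac{1+r}{2}\big)$ for all $0\le r<1$ (so $\widetilde\omega\notin\widehat{\mathcal D}$ means either $\widetilde\omega$ is not integrable or this doubling condition fails). A radial weight $\omega$ is regular if $\omega(r)\asymp\frac{\widehat{\omega}(r)}{1-r}$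 for all $0\le r<1$. *)

(* Defs.v *)
From HB Require Import structures.
From mathcomp Require Import all_boot all_order all_algebra.
From mathcomp Require Import all_classical all_reals all_analysis.
From mathcomp Require Import complex.
Import Order.TTheory GRing.Theory Num.Theory.
Import numFieldNormedType.Exports.

Set Implicit Arguments.
Unset Strict Implicit.
Unset Printing Implicit Defensive.

Local Open Scope ring_scope.
Local Open Scope classical_set_scope.

Section Defs.
Variable R : realType.

(* the complex plane, with its normed-space structure over itself *)
Definition Cplx := (R[i])^o.

Definition cmod (w : Cplx) : R := complex.Re (`|w| : R[i]).

Definition analytic_on_disc (f : Cplx -> Cplx) : Prop :=
  forall z : Cplx, cmod z < 1 -> derivable f z 1.

Definition hatw (w : R -> R) (r : R) : \bar R :=
  \int[lebesgue_measure]_(s in `[r, 1%R[) (w s)%:E.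

Definition tildew (w : R -> R) (r : R) : R := fine (hatw w r) / (1 - r).

Definition radial_weight (w : R -> R) : Prop :=
  [/\ forall r, 0 <= r < 1 -> 0 <= w r,
      lebesgue_measure.-integrable `[0, 1[ (EFin \o w)
    & forall r, 0 <= r < 1 -> (0 < hatw w r)%E].

Definition Dhat (nu : R -> R) : Prop :=
  lebesgue_measure.-integrable `[0, 1[ (EFin \o nu) /\
  exists C : R, 1 <= C /\
    forall r, 0 <= r < 1 -> (hatw nu r <= C%:E * hatw nu ((1 + r) / 2))%E.

Definition regular_weight (w : R -> R) : Prop :=
  radial_weight w /\
  exists C : R, 1 <= C /\
    forall r, 0 <= r < 1 -> tildew w r / C <= w r /\ w r <= C * tildew w r.

(* the unit disc, as a subset of R x R (z = x + i y) *)
Definition disc : set (R * R) := [set xy | xy.1 ^+ 2 + xy.2 ^+ 2 < 1].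

(* weighted Bergman space A^p_w: analytic f on D with
   \int_D |f|^p w dA < oo, where dA = dx dy / pi and w(z) = w(|z|) *)
Definition Apw (p : R) (w : R -> R) (f : Cplx -> Cplx) : Prop :=
  analytic_on_disc f /\
  (\int[(lebesgue_measure \x lebesgue_measure)%E]_(xy in disc)
     ((cmod (f (Complex xy.1 xy.2 : R[i])) `^ p
       * w (Num.sqrt (xy.1 ^+ 2 + xy.2 ^+ 2)) / pi)%:E) < +oo)%E.

Definition Ap (p : R) (f : Cplx -> Cplx) : Prop := Apw p (fun _ => 1) f.

End Defs.

(* Main.v *)
Require Import Defs.
From HB Require Import structures.
From mathcomp Require Import all_boot all_order all_algebra.
From mathcomp Require Import all_classical all_reals all_analysis.
From mathcomp Require Import complex.
From mathcomp Require Import measurable_realfun.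
From mathcomp Require Import ring lra.
Import Order.TTheory GRing.Theory Num.Theory.
Import numFieldNormedType.Exports.
Set Implicit Arguments.
Unset Strict Implicit.
Unset Printing Implicit Defensive.
Local Open Scope ring_scope.
Local Open Scope classical_set_scope.


Section S.
Variable R : realType.
Local Notation mu := (@lebesgue_measure R).

Lemma hat_ub (g : R -> R) (s c : R) : s < 1 -> measurable_fun `[s, 1[ g ->
  (forall u, s <= u < 1 -> 0 <= g u <= c) ->
  (0 <= hatw g s /\ hatw g s <= (c * (1 - s))%:E)%E.
Proof.
move=> s1 mg gb; split.
  by apply: integral_ge0 => u /= /[!in_itv] /= /andP[su u1]; rewrite lee_fin; case/andP: (gb u ltac:(by rewrite su u1)).
rewrite /hatw.
have -> : ((c * (1 - s))%:E = \int[mu]_(u in `[s, 1%R[) (cst c%:E) u)%E.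
  by rewrite integral_cst //= lebesgue_measure_itv /= lte_fin s1 -EFinD EFinM.
apply: ge0_le_integral => //.
- by move=> u /= /[!in_itv] /= /andP[su u1]; rewrite lee_fin; case/andP: (gb u ltac:(by rewrite su u1)).
- exact/measurable_EFinP.
- move=> u /= /[!in_itv] /= /andP[su u1]; rewrite lee_fin; case/andP: (gb u ltac:(by rewrite su u1)) => //.
Qed.

Lemma hat_lb (g : R -> R) (s t c : R) : s <= t -> t < 1 ->
  measurable_fun `[s, 1%R[ g -> (forall u, s <= u < 1 -> 0 <= g u) -> 0 <= c ->
  (forall u, s <= u < t -> c <= g u) -> ((c * (t - s))%:E <= hatw g s)%E.
Proof.
move=> st t1 mg g0 c0 gc; rewrite /hatw.
have sub : `[s, t[ `<=` `[s, 1%R[.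
  move=> u /= /[!in_itv] /= /andP[su ut]; rewrite su /=; exact: lt_trans ut t1.
apply: (@le_trans _ _ (\int[mu]_(u in `[s, t[) (g u)%:E))%E; last first.
  apply: ge0_subset_integral => //; first exact/measurable_EFinP.
have -> : ((c * (t - s))%:E = \int[mu]_(u in `[s, t[) (cst c%:E) u)%E.
  rewrite integral_cst //= lebesgue_measure_itv /= lte_fin.
  have [_|ts] := ltP s t; first by rewrite -EFinD EFinM.
  have ets : t = s by apply/eqP; rewrite eq_le ts st.
  have -> : t - s = 0 by rewrite ets subrr.
  by rewrite mulr0 mule0.
apply: ge0_le_integral => //.
  apply/measurable_EFinP; exact: measurable_funS mg.
Qed.
Lemma fine_le_bounds (h : \bar R) (c d : R) : (c%:E <= h)%E -> (h <= d%:E)%E -> c <= fine h <= d.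
Proof. by case: h => [r| |] //=; rewrite !lee_fin => -> ->. Qed.
End S.

Section E.
Variable R : realType.

Definition e (n : nat) : R := ((2 ^ n)%N%:R)^-1.

Lemma e_gt0 n : 0 < e n.
Proof. by rewrite /e invr_gt0 ltr0n expn_gt0. Qed.

Lemma eS n : e n.+1 = e n / 2.
Proof. by rewrite /e expnS natrM invfM mulrC. Qed.

Lemma e0 : e 0 = 1.
Proof. by rewrite /e expn0 invr1. Qed.

Lemma e_le n m : (n <= m)%N -> e m <= e n.
Proof.
move=> nm; rewrite /e lef_pV2 ?posrE ?ltr0n ?expn_gt0 // ler_nat leq_pexp2l //.
Qed.

Lemma e_small (eps : R) : 0 < eps -> exists n, e n < eps.
Proof.
move=> eps0; have h0 : 0 <= eps^-1 by rewrite invr_ge0 ltW.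
have := archi_boundP h0.
set n := Num.bound _ => hn; exists n.
rewrite /e -(invrK eps) ltf_pV2 ?posrE ?invr_gt0 ?ltr0n ?expn_gt0 //.
apply: (lt_le_trans hn); rewrite ler_nat; exact/ltnW/ltn_expl.
Qed.

Lemma N_ex (s : R) : 0 <= s < 1 -> exists n, 1 - e n <= s < 1 - e n.+1.
Proof.
case/andP=> s0 s1.
have s1' : 0 < 1 - s by rewrite subr_gt0.
have [m hm] := e_small s1'.
have ex : exists m, e m < 1 - s by exists m.
case: (ex_minnP ex) => k' hk' kmin.
case: k' hk' kmin => [|k] hk kmin.
  by move: hk; rewrite e0 => hk; lra.
exists k; have hk2 : 1 - s <= e k.
  rewrite leNgt; apply/negP => h; have := kmin k h; by rewrite ltnn.
apply/andP; split; lra.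
Qed.

Definition N (s : R) : nat := xget 0%N [set n | 1 - e n <= s < 1 - e n.+1].

Lemma N_spec (s : R) : 0 <= s < 1 -> 1 - e (N s) <= s < 1 - e (N s).+1.
Proof.
move=> hs; rewrite /N; case: xgetP => //.
by have [n hn] := N_ex hs => /(_ n); rewrite /= hn => /(_ isT).
Qed.


Lemma e_le1 n : e n <= 1.
Proof. by rewrite -e0 e_le. Qed.

Lemma N_mono (s t : R) : 0 <= s -> s <= t -> t < 1 -> (N s <= N t)%N.
Proof.
move=> s0 st t1.
have /N_spec hs : 0 <= s < 1 by rewrite s0 (le_lt_trans st t1).
have /N_spec ht : 0 <= t < 1 by rewrite (le_trans s0 st) t1.
rewrite leqNgt; apply/negP => h.
have := e_le h; move: hs ht => /andP[hs1 hs2] /andP[ht1 ht2] hh; lra.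
Qed.

Lemma N_eq n (s : R) : 1 - e n <= s < 1 - e n.+1 -> N s = n.
Proof.
move=> /[dup] /andP[h1 h2] hn.
have hs : 0 <= s < 1 by apply/andP; split; have := e_le1 n; have := e_gt0 n.+1; lra.
have /andP[m1 m2] := N_spec hs.
apply/eqP; rewrite eqn_leq; apply/andP; split; rewrite leqNgt; apply/negP => h.
  have := e_le h; lra.
have := e_le h; lra.
Qed.

End E.

Section P.
Variable R : realType.
Variable phi : R -> R.
Hypothesis phi_decr : forall s t : R, 0 <= s <= 1 -> 0 <= t <= 1 -> s <= t -> phi t <= phi s.
Hypothesis phi_gt0 : forall t : R, 0 <= t < 1 -> 0 < phi t.

Definition a (n : nat) : R := phi (1 - e R n).

Lemma pt_in n : 0 <= 1 - e R n < 1.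
Proof. by apply/andP; split; have := e_le1 R n; have := e_gt0 R n; lra. Qed.

Lemma a_gt0 n : 0 < a n.
Proof. exact/phi_gt0/pt_in. Qed.

Lemma a_decr n m : (n <= m)%N -> a m <= a n.
Proof.
move=> nm; rewrite /a; apply: phi_decr.
- by have /andP[h1 h2] := pt_in n; rewrite h1 ltW.
- by have /andP[h1 h2] := pt_in m; rewrite h1 ltW.
- by have := e_le R nm; lra.
Qed.

Fixpoint bj (n : nat) : R * nat :=
  match n with
  | 0 => (a 0, 0%N)
  | n'.+1 => let p := bj n' in
      if a n'.+1 * (p.2.+2)%:R <= p.1 then (a n'.+1, p.2.+1) else p
  end.

Lemma a_le_b n : a n <= (bj n).1.
Proof.
elim: n => [|n IH] //=.
case: ifP => _ //=; apply: le_trans IH; exact: a_decr.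
Qed.

Lemma b_gt0 n : 0 < (bj n).1.
Proof. exact: lt_le_trans (a_gt0 n) (a_le_b n). Qed.

Lemma b_decr n : (bj n.+1).1 <= (bj n).1.
Proof.
rewrite /=; case: ifP => h //=; apply: le_trans h.
rewrite ler_peMr ?(ltW (a_gt0 _)) //.
by rewrite ler1n.
Qed.

Lemma b_mono n m : (n <= m)%N -> (bj m).1 <= (bj n).1.
Proof.
elim: m => [|m IH]; first by rewrite leqn0 => /eqP->.
rewrite leq_eqVlt => /orP[/eqP->//|]; rewrite ltnS => /IH.
exact: le_trans (b_decr m).
Qed.

Lemma j_mono n m : (n <= m)%N -> ((bj n).2 <= (bj m).2)%N.
Proof.
elim: m => [|m IH]; first by rewrite leqn0 => /eqP->.
rewrite leq_eqVlt => /orP[/eqP->//|]; rewrite ltnS => /IH h.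
apply: (leq_trans h) => /=; case: ifP => //= _; exact: leqnSn.
Qed.

Hypothesis a_cvg : forall eps : R, 0 < eps -> exists m0, forall m, (m0 <= m)%N -> a m < eps.

Lemma drop_after n : exists m, (n <= m)%N /\ a m.+1 * ((bj m).2.+2)%:R <= (bj m).1.
Proof.
apply: contrapT => H.
have nd : forall m, (n <= m)%N -> ~~ (a m.+1 * ((bj m).2.+2)%:R <= (bj m).1).
  by move=> m nm; apply/negP => d; apply: H; exists m.
have cst : forall k, bj (n + k)%N = bj n.
  elim=> [|k IH]; first by rewrite addn0.
  rewrite addnS /=; rewrite (negbTE (nd _ (leq_addr k n))); exact: IH.
set B := (bj n).1; set J := (bj n).2.
have hJ : 0 < (J.+2)%:R :> R by rewrite ltr0n.
have eps0 : 0 < B / (J.+2)%:R by rewrite divr_gt0 ?b_gt0.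
have [m0 hm0] := a_cvg eps0.
have := hm0 (n + m0).+1 (leqW (leq_addl _ _)).
have := nd (n + m0)%N (leq_addr _ _); rewrite cst -/B -/J => hnd.
rewrite ltr_pdivlMr // => hlt.
by move: hnd; rewrite (ltW hlt).
Qed.

Lemma big_drop K : exists m, (K <= (bj m).2)%N /\ a m.+1 * ((bj m).2.+2)%:R <= (bj m).1.
Proof.
elim: K => [|K [m [hK hd]]]; first by have [m [_ h]] := drop_after 0; exists m.
have [m' [hm' hd']] := drop_after m.+1.
exists m'; split => //.
have : (bj m.+1).2 = (bj m).2.+1 by rewrite /= hd.
move=> h1; have := j_mono hm'; rewrite h1; exact: leq_trans.
Qed.

Definition om (s : R) : R := if s < 0 then (bj 0).1 else if s < 1 then (bj (N s)).1 else 0.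

Lemma om_in s : 0 <= s < 1 -> om s = (bj (N s)).1.
Proof. by case/andP => s0 s1; rewrite /om ltNge s0 /= s1. Qed.

Lemma om_ge0 s : 0 <= om s.
Proof. rewrite /om; case: ifP => _; first exact/ltW/b_gt0. case: ifP => _ //; exact/ltW/b_gt0. Qed.

Lemma om_le s : om s <= (bj 0).1.
Proof.
rewrite /om; case: ifP => _ //; case: ifP => _; first exact: b_mono.
exact/ltW/b_gt0.
Qed.

Lemma om_nonincr : {homo om : x y / x <= y >-> y <= x}.
Proof.
move=> s t st.
have [s0|s0] := ltP s 0; first by rewrite {2}/om s0 om_le.
have [t1|t1] := ltP t 1; last by rewrite {1}/om ltNge (le_trans s0 st) /= ltNge t1 om_ge0.
rewrite !om_in ?s0 ?(le_trans s0 st) ?(le_lt_trans st t1) ?t1 //.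
exact/b_mono/N_mono.
Qed.

Lemma phi_le_om s : 0 <= s < 1 -> phi s <= om s.
Proof.
move=> /[dup] hs /andP[s0 s1]; rewrite om_in //.
apply: le_trans (a_le_b _); rewrite /a; apply: phi_decr.
- by have /andP[h1 h2] := pt_in (N s); rewrite h1 ltW.
- by rewrite s0 ltW.
- by case/andP: (N_spec hs).
Qed.

End P.

Section Q.
Variable R : realType.
Local Notation mu := (@lebesgue_measure R).


Variable phi : R -> R.
Hypothesis phi_decr : forall s t : R, 0 <= s <= 1 -> 0 <= t <= 1 -> s <= t -> phi t <= phi s.
Hypothesis phi_gt0 : forall t : R, 0 <= t < 1 -> 0 < phi t.

Local Notation om := (om phi).
Local Notation bj := (bj phi).

Lemma om_meas (D : set R) : measurable D -> measurable_fun D om.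
Proof. move=> mD; apply: nonincreasing_measurable => //; exact: (om_nonincr phi_decr phi_gt0). Qed.

Lemma om_radial : radial_weight om.
Proof.
split.
- by move=> r _; exact: (om_ge0 phi_decr phi_gt0).
- apply/integrableP; split; first by apply/measurable_EFinP; exact: om_meas.
  have -> : (\int[mu]_(x in `[0%R, 1%R[) `|(EFin \o om) x| = hatw om 0)%E.
    by apply: eq_integral => x _ /=; rewrite ger0_norm // (om_ge0 phi_decr phi_gt0).
  have [_ h] := @hat_ub _ om 0 (bj 0).1 ltr01 (om_meas (measurable_itv _))
    (fun u _ => introT andP (conj (om_ge0 phi_decr phi_gt0 u) (om_le phi_decr phi_gt0 u))).
  exact: le_lt_trans h (ltry _).
- move=> r /andP[r0 r1].
  set t := (1 + r) / 2.
  have rt : r <= t by rewrite /t; lra.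
  have t1 : t < 1 by rewrite /t; lra.
  have ht : 0 < om t.
    rewrite om_in; first exact: b_gt0.
    by apply/andP; split; rewrite /t; lra.
  apply: lt_le_trans (@hat_lb _ om r t (om t) rt t1 (om_meas (measurable_itv _)) _ (ltW ht) _).
  + by rewrite lte_fin mulr_gt0 // /t; lra.
  + by move=> u _; exact: (om_ge0 phi_decr phi_gt0).
  + by move=> u /andP[_ ut]; apply: (om_nonincr phi_decr phi_gt0); exact: ltW.
Qed.


Hypothesis a_cvg : forall eps : R, 0 < eps -> exists m0, forall m, (m0 <= m)%N -> a phi m < eps.

Lemma om_not_dhat : ~ Dhat (tildew om).
Proof.
move=> [/integrableP [mnu _] [C [C1 hC]]].
have mnu' : measurable_fun (`[0%R, 1%R[ : set R) (tildew om) by apply/measurable_EFinP.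
have C0 : 0 <= 8 * C by lra.
have [m [hK hd]] := big_drop phi_decr phi_gt0 a_cvg (Num.bound (8 * C)).
have hK8 := archi_boundP C0.
set j := (bj m).2 in hK hd.
set b0 := (bj m).1 in hd.
have hb1 : (bj m.+1).1 = a phi m.+1 by rewrite /= -/j -/b0 hd.
set b1 := a phi m.+1 in hd hb1.
have b1pos : 0 < b1 by rewrite -hb1 (b_gt0 phi_decr phi_gt0).
set r := 1 - e R m.
set x := 1 - e R m.+1.
have er := e_gt0 R m; have eSm := eS R m; have e1 := e_le1 R m.
have hx : x = (1 + r) / 2 by rewrite /x /r eSm; field.
have r0 : 0 <= r by rewrite /r; lra.
have rx : r < x by rewrite /x /r eSm; lra.
have x1 : x < 1 by rewrite /x; have := e_gt0 R m.+1; lra.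
have om_mid u : r <= u < x -> om u = b0.
  move=> hu; rewrite om_in ?(N_eq hu) //.
  by case/andP: hu => h1 h2; apply/andP; split; lra.
have om_tail u : x <= u < 1 -> om u <= b1.
  move=> /andP[h1 h2]; rewrite om_in; last by apply/andP; split; lra.
  rewrite -hb1; apply: (b_mono phi_gt0); rewrite -(N_eq (n := m.+1) (s := x)); last first.
    by rewrite lexx /= /x (eS R m.+1); have := e_gt0 R m.+1; lra.
  by apply: N_mono => //; lra.
have om0 u : 0 <= om u by exact: (om_ge0 phi_decr phi_gt0).
have omM u : om u <= (bj 0).1 by exact: (om_le phi_decr phi_gt0).
have mom u : measurable_fun (`[u, 1%R[ : set R) om by apply: om_meas.
have nu0 u : 0 <= u < 1 -> 0 <= tildew om u.
  move=> /andP[u0 u1]; rewrite /tildew.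
  have [h1 h2] := @hat_ub _ om u (bj 0).1 u1 (mom u) (fun v _ => introT andP (conj (om0 v) (omM v))).
  have := @fine_le_bounds _ (hatw om u) 0 _ h1 h2 => /andP[f0 _].
  by rewrite divr_ge0 // subr_ge0 ltW.
have nu_tail u : x <= u < 1 -> tildew om u <= b1.
  move=> /andP[u0 u1]; rewrite /tildew.
  have [h1 h2] := @hat_ub _ om u b1 u1 (mom u) (fun v hv => introT andP (conj (om0 v) (om_tail v ltac:(case/andP: hv => ? ?; apply/andP; split; lra)))).
  have := @fine_le_bounds _ (hatw om u) 0 _ h1 h2 => /andP[_ f1].
  rewrite ler_pdivrMr; last lra.
  done.
have nu_mid u : r <= u <= r + (1 - r) / 4 -> b0 / 4 <= tildew om u.
  move=> /andP[u0 u1]; rewrite /tildew.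
  have ux : u <= x by lra.
  have u1' : u < 1 by lra.
  have [_ h2] := @hat_ub _ om u (bj 0).1 u1' (mom u) (fun v _ => introT andP (conj (om0 v) (omM v))).
  have h1 : ((b0 * (x - u))%:E <= hatw om u)%E.
    apply: (@hat_lb _ om u x b0 ux x1 (mom u)).
    - by move=> v _; exact: om0.
    - exact/ltW/(b_gt0 phi_decr phi_gt0).
    - by move=> v /andP[? ?]; rewrite om_mid //; apply/andP; split; lra.
  have := @fine_le_bounds _ (hatw om u) _ _ h1 h2 => /andP[f1 _].
  rewrite ler_pdivlMr; last lra.
  apply: le_trans f1.
  have b0pos : 0 < b0 by apply: (b_gt0 phi_decr phi_gt0).
  nra.
set y := r + (1 - r) / 4.
have ry : r <= y by rewrite /y; lra.
have y1 : y < 1 by rewrite /y; lra.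
have subr : (`[r, 1%R[ : set R) `<=` `[0%R, 1%R[.
  by move=> v /= /[!in_itv] /= /andP[h1 h2]; rewrite h2 andbT; lra.
have mnur : measurable_fun (`[r, 1%R[ : set R) (tildew om) by apply: measurable_funS mnu'.
have subx : (`[x, 1%R[ : set R) `<=` `[0%R, 1%R[.
  by move=> v /= /[!in_itv] /= /andP[h1 h2]; rewrite h2 andbT; lra.
have mnux : measurable_fun (`[x, 1%R[ : set R) (tildew om) by apply: measurable_funS mnu'.
have b0pos : 0 < b0 by apply: (b_gt0 phi_decr phi_gt0).
have L : (((b0 / 4) * (y - r))%:E <= hatw (tildew om) r)%E.
  apply: (@hat_lb _ (tildew om) r y (b0 / 4) ry y1 mnur).
  - by move=> v /andP[h1 h2]; apply: nu0; apply/andP; split; lra.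
  - lra.
  - by move=> v /andP[h1 h2]; apply: nu_mid; rewrite /y in h2; apply/andP; split; lra.
have [_ U] := @hat_ub _ (tildew om) x b1 x1 mnux
  (fun v hv => introT andP (conj (nu0 v ltac:(case/andP: hv => ? ?; apply/andP; split; lra)) (nu_tail v hv))).
have D := hC r ltac:(apply/andP; split; lra).
rewrite -hx in D.
have := le_trans L (le_trans D (lee_wpmul2l (ltac:(rewrite lee_fin; lra) : (0 <= C%:E)%E) U)).
rewrite -EFinM lee_fin => H.
have Kj : (Num.bound (8 * C))%:R <= (j.+2)%:R :> R.
  by rewrite ler_nat; apply: (leq_trans hK); rewrite leqW // leqW.
have : (j.+2)%:R * b1 <= 8 * C * b1.
  rewrite [X in X <= _]mulrC; apply: le_trans hd _.
  have eq1 : b0 / 4 * (y - r) = e R m * (b0 / 16) by rewrite /y /r; field.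
  have eq2 : C * (b1 * (1 - x)) = e R m * (C * b1 / 2) by rewrite /x eSm; field.
  rewrite eq1 eq2 ler_pM2l // in H; lra.
have : 8 * C * b1 < (j.+2)%:R * b1.
  rewrite ltr_pM2r //; exact: lt_le_trans hK8 Kj.
move=> h1 h2; have := lt_le_trans h1 h2; by rewrite ltxx.
Qed.

End Q.

Section NM.
Local Open Scope ereal_scope.
Context d (T : measurableType d) (R : realType).
Variable mu : {measure set T -> \bar R}.
Import HBNNSimple.

Lemma le_int_nm (D : set T) (f g : T -> \bar R) :
  (forall x, D x -> 0 <= f x) -> (forall x, D x -> f x <= g x) ->
  \int[mu]_(x in D) f x <= \int[mu]_(x in D) g x.
Proof.
move=> f0 fg.
have g0 x : D x -> 0 <= g x by move=> Dx; exact: le_trans (f0 _ Dx) (fg _ Dx).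
rewrite (ge0_integralE mu f0) (ge0_integralE mu g0).
apply: ge_ereal_sup => _ [h hh <-]; apply: ereal_sup_ubound; exists h => //= x.
apply: le_trans (hh x) _; rewrite /patch; case: ifP => // /set_mem Dx; exact: fg.
Qed.

Lemma int_scale_nm (D : set T) (f : T -> \bar R) (k : R) : (0 < k)%R ->
  (forall x, D x -> 0 <= f x) ->
  \int[mu]_(x in D) (k%:E * f x) <= k%:E * \int[mu]_(x in D) f x.
Proof.
move=> k0 f0.
have kf0 x : D x -> 0 <= k%:E * f x by move=> Dx; apply: mule_ge0; [rewrite lee_fin ltW | exact: f0].
rewrite (ge0_integralE mu f0) (ge0_integralE mu kf0).
apply: ge_ereal_sup => _ [h hh <-].
have ki0 : (0 <= k^-1)%R by rewrite invr_ge0 ltW.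
pose h' := scale_nnsfun h ki0.
have -> : sintegral mu h = k%:E * sintegral mu h'.
  rewrite -sintegralrM; apply: eq_sintegral => x /=.
  by rewrite mulrA mulfV ?gt_eqF // mul1r.
apply: lee_wpmul2l; first by rewrite lee_fin ltW.
apply: ereal_sup_ubound; exists h' => //= x.
have := hh x; rewrite /patch; case: ifP => _; last first.
  have -> : point = 0 :> \bar R by [].
  move=> hx0; have hx : h x = 0%R by apply/eqP; rewrite eq_le -lee_fin hx0 /=; exact: fun_ge0.
  by rewrite hx mulr0.
move=> hx; rewrite -(@lee_pmul2l _ k%:E) // ?lte_fin // -EFinM mulrA mulfV ?gt_eqF // mul1r.
exact: hx.
Qed.
End NM.

Section I.
Variable R : realType.

Lemma Apw_incl (p : R) (w1 w2 : R -> R) (K : R) (f : Cplx R -> Cplx R) : 0 < K ->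
  (forall t, 0 <= t < 1 -> [/\ 0 <= w1 t, 0 <= w2 t & w1 t <= K * w2 t]) ->
  Apw p w2 f -> Apw p w1 f.
Proof.
move=> K0 hw [af hf]; split => //.
move: hf.
set F2 := fun xy : R * R => ((cmod (f (Complex xy.1 xy.2 : R[i])) `^ p
       * w2 (Num.sqrt (xy.1 ^+ 2 + xy.2 ^+ 2)) / pi)%:E).
set F1 := fun xy : R * R => ((cmod (f (Complex xy.1 xy.2 : R[i])) `^ p
       * w1 (Num.sqrt (xy.1 ^+ 2 + xy.2 ^+ 2)) / pi)%:E).
move=> hf.
have ht xy : disc xy -> 0 <= Num.sqrt (xy.1 ^+ 2 + xy.2 ^+ 2) < 1.
  rewrite /disc /= => h; rewrite sqrtr_ge0 /= -sqrtr1 ltr_sqrt //.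
have pi0 := pi_gt0 R.
have F20 xy : disc xy -> (0 <= F2 xy)%E.
  move=> /ht /hw [h1 h2 h3]; rewrite lee_fin divr_ge0 ?(ltW pi0) // mulr_ge0 ?powR_ge0 //.
have F10 xy : disc xy -> (0 <= F1 xy)%E.
  move=> /ht /hw [h1 h2 h3]; rewrite lee_fin divr_ge0 ?(ltW pi0) // mulr_ge0 ?powR_ge0 //.
have F12 xy : disc xy -> (F1 xy <= K%:E * F2 xy)%E.
  move=> /ht /hw [h1 h2 h3]; rewrite -EFinM lee_fin.
  set c := _ `^ p.
  have c0 : 0 <= c by apply: powR_ge0.
  have ip : 0 <= (pi : R)^-1 by rewrite invr_ge0 ltW.
  rewrite !mulrA [K * c]mulrC -[c * K * _]mulrA ler_wpM2r // ler_wpM2l //.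
have := le_int_nm (lebesgue_measure \x lebesgue_measure)%E F10 F12.
have := int_scale_nm (lebesgue_measure \x lebesgue_measure)%E K0 F20.
move=> h1 h2; apply: (le_lt_trans h2); apply: (le_lt_trans h1).
have := integral_ge0 (lebesgue_measure \x lebesgue_measure)%E F20.
move: hf; case: (X in (X < +oo)%E) => [r| |] //= _ _.
by rewrite -EFinM ltry.
Qed.
End I.

Lemma a_cvg_of (R : realType) (phi : R -> R) (phi_lim : phi x @[x --> 1^'-] --> 0) :
  forall eps : R, 0 < eps -> exists m0, forall m, (m0 <= m)%N -> phi (1 - e R m) < eps.
Proof.
move=> eps eps0.
move/cvgrPdist_lt : phi_lim => /(_ eps eps0).
rewrite near_withinE => /nbhs_ballP [d /= d0 H].
have [m0 hm0] := e_small d0.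
exists m0 => m hm.
have em := e_le R hm; have e0 := e_gt0 R m.
have := H (1 - e R m); rewrite sub0r normrN => h.
apply: le_lt_trans (ler_norm _) _; apply: h.
  by rewrite /ball /= opprB addrC subrK ger0_norm ?(ltW e0) //; lra.
lra.
Qed.

Section R2.
Variable R : realType.
Variable phi : R -> R.
Hypothesis phi_decr : forall s t : R, 0 <= s <= 1 -> 0 <= t <= 1 -> s <= t -> phi t <= phi s.
Hypothesis phi_gt0 : forall t : R, 0 <= t < 1 -> 0 < phi t.
Variable C : R.
Hypothesis C0 : 0 < C.
Hypothesis dphi : forall t : R, 0 <= t < 1 -> derivable phi t 1.
Hypothesis hd : forall t : R, 0 <= t < 1 -> - derive1 phi t / phi t <= C / (1 - t).

Lemma mvt_step (r : R) : 0 <= r < 1 ->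
  phi r / (C + 1) <= phi (r + (1 - r) / (2 * C + 2)).
Proof.
move=> /andP[r0 r1]; have Cpos : 0 < C := C0.
set d := (1 - r) / (2 * C + 2).
have d0 : 0 < d.
  rewrite /d; apply: divr_gt0.
    lra.
  lra.
have d2 : d <= (1 - r) / 2.
  rewrite /d; apply: ler_wpM2l; first lra.
  rewrite lef_pV2 ?posrE; lra.
have [c hc hmvt] : exists2 c, c \in `]r, r + d[%R &
    phi (r + d) - phi r = derive1 phi c * (r + d - r).
  apply: MVT.
  - lra.
  - move=> x /[!in_itv] /= /andP[h1 h2]; rewrite derive1E; apply: derivableP; apply: dphi.
    apply/andP; split; lra.
  - apply: derivable_within_continuous => x /[!in_itv] /= /andP[h1 h2]; apply: dphi.
    apply/andP; split; lra.
move: hc; rewrite in_itv /= => /andP[rc cd].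
have c01 : 0 <= c < 1 by apply/andP; split; lra.
have qpos := phi_gt0 c01.
have Ppos := phi_gt0 (introT andP (conj r0 r1)).
have qP : phi c <= phi r by apply: phi_decr => //; [apply/andP; split; lra|apply/andP; split; lra|lra].
have H := hd c01.
set D := derive1 phi c in hmvt H.
set q := phi c in qpos qP H.
set P := phi r in Ppos qP *.
have u2 : (1 - r) / 2 <= 1 - c by lra.
have upos : 0 < 1 - c by lra.
have H1 : - D <= C * q / (1 - c).
  by move: H; rewrite ler_pdivrMr // mulrAC.
have H2 : C * q / (1 - c) <= 2 * C * P / (1 - r).
  rewrite ler_pdivrMr // mulrAC ler_pdivlMr; last lra.
  have h1 : C * q <= C * P by rewrite ler_wpM2l //; lra.
  have h2 : C * P * (1 - r) <= C * P * (2 * (1 - c)).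
    rewrite ler_wpM2l //; last lra.
    by rewrite mulr_ge0 //; lra.
  have h3 : C * q * (1 - r) <= C * P * (1 - r) by rewrite ler_wpM2r //; lra.
  have -> : 2 * C * P * (1 - c) = C * P * (2 * (1 - c)) by ring.
  exact: le_trans h3 h2.
have H3 : - D * d <= C * P / (C + 1).
  have -> : C * P / (C + 1) = 2 * C * P / (1 - r) * d by rewrite /d; field; lra.
  by rewrite ler_wpM2r //; [lra|exact: le_trans H1 H2].
have e1 : r + d - r = d by ring.
rewrite e1 -/P -/D in hmvt.
have -> : phi (r + d) = P + D * d by lra.
have -> : P / (C + 1) = P - C * P / (C + 1) by field; lra.
lra.
Qed.


Definition phic (x : R) : R := if x < 0 then phi 0 else if x < 1 then phi x else phi 1.

Lemma phic_nonincr : {homo phic : x y / x <= y >-> y <= x}.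
Proof.
move=> x y xy; rewrite /phic.
have H a b : 0 <= a <= 1 -> 0 <= b <= 1 -> a <= b -> phi b <= phi a by exact: phi_decr.
have [x0|x0] := ltP x 0; have [y0|y0] := ltP y 0;
  have [x1|x1] := ltP x 1; have [y1|y1] := ltP y 1;
  try (apply: H; try (apply/andP; split); lra); lra.
Qed.

Lemma phi_meas (s : R) : 0 <= s -> measurable_fun (`[s, 1%R[ : set R) phi.
Proof.
move=> s0; apply: (@eq_measurable_fun _ _ _ _ _ phic).
  move=> x /[!inE] /= /[!in_itv] /= /andP[h1 h2].
  by rewrite /phic ltNge (le_trans s0 h1) /= h2.
apply: nonincreasing_measurable => //; exact: phic_nonincr.
Qed.

Lemma phi_regular : regular_weight phi.
Proof.
have Cpos : 0 < C := C0.
have pb u : 0 <= u < 1 -> 0 <= phi u <= phi 0.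
  move=> /andP[u0 u1]; rewrite (ltW (phi_gt0 _)) /=; last by apply/andP; split; lra.
  apply: phi_decr; try (apply/andP; split); lra.
have pmono u v : 0 <= u -> u <= v -> v < 1 -> phi v <= phi u.
  by move=> u0 uv v1; apply: phi_decr; try (apply/andP; split); lra.
split.
  split.
  - by move=> r hr; have /andP[] := pb r hr.
  - apply/integrableP; split; first by apply/measurable_EFinP; exact: phi_meas.
    have -> : (\int[lebesgue_measure]_(x in `[0%R, 1%R[) `|(EFin \o phi) x| = hatw phi 0)%E.
      apply: eq_integral => x /[!inE] /= /[!in_itv] /= hx.
      by rewrite ger0_norm //; have /andP[] := pb x hx.
    have [_ h] := @hat_ub _ phi 0 (phi 0) ltr01 (phi_meas (lexx 0)) pb.
    exact: le_lt_trans h (ltry _).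
  - move=> r /andP[r0 r1].
    set t := (1 + r) / 2.
    have rt : r <= t by rewrite /t; lra.
    have t1 : t < 1 by rewrite /t; lra.
    have ht : 0 < phi t by apply: phi_gt0; apply/andP; split; rewrite /t; lra.
    apply: lt_le_trans (@hat_lb _ phi r t (phi t) rt t1 (phi_meas r0) _ (ltW ht) _).
    + by rewrite lte_fin mulr_gt0 // /t; lra.
    + by move=> u /andP[h1 h2]; have /andP[] := pb u ltac:(apply/andP; split; lra).
    + by move=> u /andP[h1 h2]; apply: pmono => //; lra.
exists (2 * (C + 1) ^+ 2); split.
  have : 1 <= (C + 1) ^+ 2 by rewrite expr_ge1 //; lra.
  lra.
move=> r /andP[r0 r1].
have Ppos : 0 < phi r by apply: phi_gt0; apply/andP; split.
have [h0 hU] := @hat_ub _ phi r (phi r) r1 (phi_meas r0)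
  (fun u hu => ltac:(case/andP: hu => h1 h2; apply/andP; split;
     [have /andP[] := pb u ltac:(apply/andP; split; lra) | apply: pmono]; lra)).
have ms := mvt_step (introT andP (conj r0 r1)).
set d := (1 - r) / (2 * C + 2) in ms.
have d0 : 0 < d by rewrite /d; apply: divr_gt0; lra.
have d2 : d <= (1 - r) / 2.
  rewrite /d; apply: ler_wpM2l; first lra.
  rewrite lef_pV2 ?posrE; lra.
have hL := @hat_lb _ phi r (r + d) (phi r / (C + 1)) ltac:(lra) ltac:(lra) (phi_meas r0)
  (fun u hu => ltac:(case/andP: hu => h1 h2; have /andP[] := pb u ltac:(apply/andP; split; lra); done))
  ltac:(apply: divr_ge0; lra)
  (fun u hu => ltac:(case/andP: hu => h1 h2; apply: le_trans ms _; apply: pmono; lra)).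
have := @fine_le_bounds R (hatw phi r) _ _ hL hU => /andP[f1 f2].
rewrite /tildew; set F := fine (hatw phi r) in f1 f2 *.
have rpos : 0 < 1 - r by lra.
have K1 : 1 <= 2 * (C + 1) ^+ 2.
  have : 1 <= (C + 1) ^+ 2 by rewrite expr_ge1 //; lra.
  lra.
have hT : F / (1 - r) <= phi r by rewrite ler_pdivrMr // mulrC.
have eK : 2 * (C + 1) ^+ 2 = (C + 1) * (2 * C + 2) by ring.
have Kpos : 0 < (C + 1) * (2 * C + 2) by apply: mulr_gt0; lra.
have hT2 : phi r / ((C + 1) * (2 * C + 2)) <= F / (1 - r).
  rewrite ler_pdivlMr //; apply: le_trans f1.
  have -> : r + d - r = d by ring.
  rewrite /d le_eqVlt; apply/orP; left; apply/eqP; field; lra.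
rewrite eK; split.
  rewrite ler_pdivrMr //; apply: le_trans hT _.
  by rewrite ler_peMr; lra.
by move: hT2; rewrite ler_pdivrMr // mulrC.
Qed.

End R2.

Unset Implicit Arguments.

Theorem theorem7 (R : realType) (phi : R -> R)
  (phi_ge0 : forall t : R, 0 <= t <= 1 -> 0 <= phi t)
  (phi_decr : forall s t : R, 0 <= s <= 1 -> 0 <= t <= 1 -> s <= t -> phi t <= phi s)
  (phi_gt0 : forall t : R, 0 <= t < 1 -> 0 < phi t)
  (phi_lim : phi x @[x --> 1^'-] --> 0) :
  (exists omega : R -> R,
      [/\ radial_weight omega,
          ~ Dhat (tildew omega)
        & forall p : R, 0 < p ->
            (forall f, Ap p f -> Apw p omega f) /\
            (forall f, Apw p omega f -> Apw p phi f)]) /\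
  (forall C : R, 0 < C ->
     (forall t : R, 0 <= t < 1 -> derivable phi t 1) ->
     (forall t : R, 0 <= t < 1 -> - derive1 phi t / phi t <= C / (1 - t)) ->
     regular_weight phi).

Proof.
split.
  exists (om phi); split.
  - exact: (om_radial phi_decr phi_gt0).
  - exact: (om_not_dhat phi_decr phi_gt0 (a_cvg_of phi_lim)).
  - move=> p p0; split => f.
    + apply: (@Apw_incl R p (om phi) (fun _ => 1) (bj phi 0).1).
        exact: (b_gt0 phi_decr phi_gt0).
      move=> t ht; split => //.
      * exact: (om_ge0 phi_decr phi_gt0).
      * by rewrite mulr1; exact: (om_le phi_decr phi_gt0).
    + apply: (@Apw_incl R p phi (om phi) 1 f ltr01).
      move=> t ht; split.
      * by case/andP: ht => h1 h2; apply: phi_ge0; rewrite h1 ltW.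
      * exact: (om_ge0 phi_decr phi_gt0).
      * by rewrite mul1r; exact: (phi_le_om phi_decr).
move=> C C0 dphi hd.
exact: (phi_regular phi_decr phi_gt0 C0 dphi hd).
Qed.
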